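(* Let $F\subseteq P_{3,4}$ be a face. Suppose there exist $f\in J_F$ and $g,c,d\in H_2$ such that $c\notin J_F$, $c-d\in J_F$, and $fg=cd$. Then $F$ is not exposed. In particular, this holds if there exist $f\in J_F$, $g\in H_2$ and $c\in H_2\setminus J_F$ with $fg=c^2$.
   Context: $H_k\subseteq\mathbb R[x,y,z]$: real ternary forms of degree $k$; $P_{3,4}=\{f\in H_4: f\ge0\text{ on }\mathbb P^2(\mathbb R)\}$. A face of $P_{3,4}$ is a convex subcone $F$ such that $a,b\in P_{3,4}$, $a+b\in F$ imply $a,b\in F$; it is exposed if $F=\ker L\cap P_{3,4}$ for a linear functional $L$ on $H_4$ nonnegative on $P_{3,4}$. $J_F=\{q\in H_2: q^2\in F\}$ (a linear subspace). *)

(* Defs.v *)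
(* real ternary forms represented as polynomial functions R^3 -> R. *)
From Stdlib Require Import Reals.
Open Scope R_scope.

Definition form := R -> R -> R -> R.

Definition is_form (k : nat) (p : form) : Prop :=
  exists c : nat -> nat -> R, forall x y z : R,
    p x y z = sum_f_R0 (fun i =>
                sum_f_R0 (fun j => c i j * x ^ i * y ^ j * z ^ (k - i - j)) (k - i)) k.

Definition fadd (p q : form) : form := fun x y z => p x y z + q x y z.
Definition fsub (p q : form) : form := fun x y z => p x y z - q x y z.
Definition fscal (a : R) (p : form) : form := fun x y z => a * p x y z.
Definition fmul (p q : form) : form := fun x y z => p x y z * q x y z.

Definition P34 (p : form) : Prop :=
  is_form 4 p /\ forall x y z : R, 0 <= p x y z.

Definition is_face (F : form -> Prop) : Prop :=
  (forall p, F p -> P34 p) /\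
  (forall p q, F p -> F q -> F (fadd p q)) /\
  (forall a p, 0 <= a -> F p -> F (fscal a p)) /\
  (forall a b, P34 a -> P34 b -> F (fadd a b) -> F a /\ F b).

Definition linear_on_H4 (L : form -> R) : Prop :=
  forall (a b : R) (p q : form), is_form 4 p -> is_form 4 q ->
    L (fadd (fscal a p) (fscal b q)) = a * L p + b * L q.

Definition exposed (F : form -> Prop) : Prop :=
  exists L : form -> R,
    linear_on_H4 L /\
    (forall p, P34 p -> 0 <= L p) /\
    (forall p, F p <-> (P34 p /\ L p = 0)).

Definition JF (F : form -> Prop) (q : form) : Prop :=
  is_form 2 q /\ F (fmul q q).

(* Main.v *)
Require Import Defs.
From Stdlib Require Import Reals Lra FunctionalExtensionality.
Open Scope R_scope.

Definition prodc (a b : nat -> nat -> R) (I J : nat) : R :=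
  match I%nat, J%nat return R with
  | 0%nat, 0%nat => a 0%nat 0%nat * b 0%nat 0%nat
  | 0%nat, 1%nat => a 0%nat 0%nat * b 0%nat 1%nat + a 0%nat 1%nat * b 0%nat 0%nat
  | 0%nat, 2%nat => a 0%nat 0%nat * b 0%nat 2%nat + a 0%nat 1%nat * b 0%nat 1%nat + a 0%nat 2%nat * b 0%nat 0%nat
  | 0%nat, 3%nat => a 0%nat 1%nat * b 0%nat 2%nat + a 0%nat 2%nat * b 0%nat 1%nat
  | 0%nat, 4%nat => a 0%nat 2%nat * b 0%nat 2%nat
  | 1%nat, 0%nat => a 0%nat 0%nat * b 1%nat 0%nat + a 1%nat 0%nat * b 0%nat 0%nat
  | 1%nat, 1%nat => a 0%nat 0%nat * b 1%nat 1%nat + a 1%nat 1%nat * b 0%nat 0%nat + a 0%nat 1%nat * b 1%nat 0%nat + a 1%nat 0%nat * b 0%nat 1%nat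
  | 1%nat, 2%nat => a 0%nat 1%nat * b 1%nat 1%nat + a 1%nat 1%nat * b 0%nat 1%nat + a 0%nat 2%nat * b 1%nat 0%nat + a 1%nat 0%nat * b 0%nat 2%nat
  | 1%nat, 3%nat => a 0%nat 2%nat * b 1%nat 1%nat + a 1%nat 1%nat * b 0%nat 2%nat
  | 2%nat, 0%nat => a 0%nat 0%nat * b 2%nat 0%nat + a 2%nat 0%nat * b 0%nat 0%nat + a 1%nat 0%nat * b 1%nat 0%nat
  | 2%nat, 1%nat => a 0%nat 1%nat * b 2%nat 0%nat + a 2%nat 0%nat * b 0%nat 1%nat + a 1%nat 0%nat * b 1%nat 1%nat + a 1%nat 1%nat * b 1%nat 0%nat
  | 2%nat, 2%nat => a 0%nat 2%nat * b 2%nat 0%nat + a 2%nat 0%nat * b 0%nat 2%nat + a 1%nat 1%nat * b 1%nat 1%nat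
  | 3%nat, 0%nat => a 1%nat 0%nat * b 2%nat 0%nat + a 2%nat 0%nat * b 1%nat 0%nat
  | 3%nat, 1%nat => a 1%nat 1%nat * b 2%nat 0%nat + a 2%nat 0%nat * b 1%nat 1%nat
  | 4%nat, 0%nat => a 2%nat 0%nat * b 2%nat 0%nat
  | _, _ => 0
  end.

Lemma mul22 p q : is_form 2 p -> is_form 2 q -> is_form 4 (fmul p q).
Proof.
  intros [a Ha] [b Hb]. exists (prodc a b). intros x y z.
  unfold fmul. rewrite Ha, Hb. simpl. ring.
Qed.

Lemma lin2 a b p q : is_form 2 p -> is_form 2 q -> is_form 2 (fadd (fscal a p) (fscal b q)).
Proof.
  intros [c1 H1] [c2 H2]. exists (fun i j => a * c1 i j + b * c2 i j). intros x y z.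
  unfold fadd, fscal. rewrite H1, H2. simpl. ring.
Qed.

Lemma lin4 a b p q : is_form 4 p -> is_form 4 q -> is_form 4 (fadd (fscal a p) (fscal b q)).
Proof.
  intros [c1 H1] [c2 H2]. exists (fun i j => a * c1 i j + b * c2 i j). intros x y z.
  unfold fadd, fscal. rewrite H1, H2. simpl. ring.
Qed.

Lemma sub2 p q : is_form 2 p -> is_form 2 q -> is_form 2 (fsub p q).
Proof.
  intros Hp Hq. replace (fsub p q) with (fadd (fscal 1 p) (fscal (-1) q)).
  apply lin2; auto.
  apply functional_extensionality; intro x; apply functional_extensionality; intro y;
  apply functional_extensionality; intro z. unfold fadd, fscal, fsub. ring.
Qed.

Lemma sq_P34 q : is_form 2 q -> P34 (fmul q q).
Proof.
  intros H. split. apply mul22; auto. intros. unfold fmul. nra.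
Qed.

Ltac fext := apply functional_extensionality; intro; apply functional_extensionality; intro;
  apply functional_extensionality; intro.

Section Exp.
Variable L : form -> R.
Hypothesis HL : linear_on_H4 L.
Hypothesis Hpos : forall p, P34 p -> 0 <= L p.

Lemma L_add p q : is_form 4 p -> is_form 4 q -> L (fadd p q) = L p + L q.
Proof.
  intros Hp Hq. replace (fadd p q) with (fadd (fscal 1 p) (fscal 1 q)).
  rewrite HL; auto; ring. fext. unfold fadd, fscal; ring.
Qed.

Lemma L_scal a p : is_form 4 p -> L (fscal a p) = a * L p.
Proof.
  intros Hp. replace (fscal a p) with (fadd (fscal a p) (fscal 0 p)).
  rewrite HL; auto; ring. fext. unfold fadd, fscal; ring.
Qed.

Lemma CS q r : is_form 2 q -> is_form 2 r -> L (fmul q q) = 0 -> L (fmul q r) = 0.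
Proof.
  intros Hq Hr H0.
  assert (Hqr : is_form 4 (fmul q r)) by (apply mul22; auto).
  assert (Hrr : is_form 4 (fmul r r)) by (apply mul22; auto).
  assert (Hqq : is_form 4 (fmul q q)) by (apply mul22; auto).
  assert (Ht : forall t, 0 <= 2 * t * L (fmul q r) + t * t * L (fmul r r)).
  { intro t.
    assert (E : fmul (fadd (fscal 1 q) (fscal t r)) (fadd (fscal 1 q) (fscal t r)) =
      fadd (fmul q q) (fadd (fscal (2*t) (fmul q r)) (fscal (t*t) (fmul r r)))).
    { fext. unfold fmul, fadd, fscal; ring. }
    pose proof (Hpos _ (sq_P34 _ (lin2 1 t q r Hq Hr))) as P.
    rewrite E in P. rewrite L_add in P; auto.
    rewrite HL in P; auto. lra.
    apply lin4; auto. }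
  assert (A0 : 0 <= L (fmul r r)) by (apply Hpos, sq_P34; auto).
  set (B := L (fmul q r)) in *. set (A := L (fmul r r)) in *.
  destruct (Req_dec B 0) as [|HB]; auto.
  specialize (Ht (- B / (A + 1))).
  exfalso.
  assert (E : 2 * (- B / (A + 1)) * B + (- B / (A + 1)) * (- B / (A + 1)) * A
      = B * B * (- A - 2) / ((A + 1) * (A + 1))) by (field; lra).
  rewrite E in Ht.
  assert (0 < B * B) by (destruct (Rlt_or_le B 0); nra).
  assert (0 < (A+1)*(A+1)) by nra.
  assert (B * B * (- A - 2) < 0) by nra.
  assert (B * B * (- A - 2) / ((A + 1) * (A + 1)) < 0).
  { unfold Rdiv. apply Rmult_neg_pos; auto. apply Rinv_0_lt_compat; auto. }
  lra.
Qed.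
End Exp.

Lemma part1 (F : form -> Prop) (hF : is_face F) :
  forall f g c d : form,
      JF F f -> is_form 2 g -> is_form 2 c -> is_form 2 d ->
      ~ JF F c -> JF F (fsub c d) -> fmul f g = fmul c d ->
      ~ exposed F.
Proof.
  intros f g c d [Hf Ff] Hg Hc Hd nc [He Fe] Heq [L [HL [Hpos HF]]].
  apply nc. split; auto.
  apply HF. split. apply sq_P34; auto.
  assert (Lff : L (fmul f f) = 0) by (apply HF; auto).
  assert (Lee : L (fmul (fsub c d) (fsub c d)) = 0) by (apply HF; auto).
  assert (Lfg : L (fmul f g) = 0) by (apply (CS L HL Hpos); auto).
  assert (Lec : L (fmul (fsub c d) c) = 0) by (apply (CS L HL Hpos); auto).
  assert (E : fmul c d = fadd (fscal 1 (fmul c c)) (fscal (-1) (fmul (fsub c d) c))).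
  { fext. unfold fmul, fadd, fscal, fsub; ring. }
  rewrite Heq, E, HL in Lfg. lra.
  all: try apply mul22; auto; apply sub2; auto.
Qed.

Theorem mainTheorem17 (F : form -> Prop) (hF : is_face F) :
  (forall f g c d : form,
      JF F f -> is_form 2 g -> is_form 2 c -> is_form 2 d ->
      ~ JF F c -> JF F (fsub c d) -> fmul f g = fmul c d ->
      ~ exposed F) /\
  (forall f g c : form,
      JF F f -> is_form 2 g -> is_form 2 c -> ~ JF F c ->
      fmul f g = fmul c c ->
      ~ exposed F).
Proof.
  split. apply part1; auto.
  intros f g c Hf Hg Hc nc Heq.
  apply (part1 F hF f g c c); auto.
  destruct Hf as [Hf Ff]. destruct hF as [_ [_ [Hs _]]].
  split. apply sub2; auto.
  replace (fmul (fsub c c) (fsub c c)) with (fscal 0 (fmul f f)).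
  apply Hs; auto. lra.
  fext. unfold fmul, fscal, fsub; ring.
Qed.
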